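(* The following two statements are equivalent. (P) For any $a\in(0,1)$ and $x\in(\frac12,1]$ there exists $\boldsymbol{\mu}\in\Lambda$ with (i) $\mu_1>\mu_2$, $\mu_1+\mu_2\ge1$, (ii) $\lambda(x,\boldsymbol{\mu})=a$, (iii) $x^\star(\boldsymbol{\mu})<\tilde x$, where $\tilde x=(\frac12+x)/2$. (D) For any $\alpha\in\mathbb{R}$ and $x\in(\frac12,1]$ there exists $\boldsymbol{\xi}=(\xi_1,\xi_2)\in\bar\Lambda$ with $(\bar{\mathrm{i}})$ $\xi_1>\xi_2$ and $\xi_1\ge-\xi_2$, $(\bar{\mathrm{ii}})$ $(1-x)\xi_1+x\xi_2=\alpha$, and $(\bar{\mathrm{iii}})$ $\bar d(\xi_1,(1-\tilde x)\xi_1+\tilde x\xi_2)>\bar d(\xi_2,(1-\tilde x)\xi_1+\tilde x\xi_2)$, where $\tilde x=(\frac12+x)/2$.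
   Context: $\Lambda=\{\boldsymbol{\mu}\in(0,1)^2:\mu_1\neq\mu_2\}$. $d(p,q)$ is the Bernoulli Kullback–Leibler divergence. $g(x,\boldsymbol{\mu})=\inf_{\lambda\in(0,1)}[(1-x)d(\lambda,\mu_1)+x\,d(\lambda,\mu_2)]$, $\lambda(x,\boldsymbol{\mu})$ is the minimizing $\lambda$, and $x^\star(\boldsymbol{\mu})=\arg\max_{x\in(0,1)}g(x,\boldsymbol{\mu})$. Let $\phi(\xi)=\log(1+e^\xi)$, so $\phi'(\xi)=\frac{e^\xi}{1+e^\xi}$ is a bijection $\mathbb{R}\to(0,1)$ with inverse $\phi'^{-1}(u)=\log\frac{u}{1-u}$; the natural parameter of $\boldsymbol{\mu}$ is $\boldsymbol{\xi}=(\phi'^{-1}(\mu_1),\phi'^{-1}(\mu_2))$, and $\bar\Lambda=\{\boldsymbol{\xi}\in\mathbb{R}^2:\xi_1\neq\xi_2\}$. The Bregman divergence is $\bar d(\alpha,\beta)=\phi(\alpha)-\phi(\beta)-(\alpha-\beta)\phi'(\beta)$, so that $d(\mu_1,\mu_2)=\bar d(\xi_2,\xi_1)$. *)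

(* Defs.v *)
From Stdlib Require Import Reals Lra ClassicalEpsilon.
From Coquelicot Require Import Coquelicot.
Open Scope R_scope.

Definition kl (p q : R) : R :=
  p * ln (p / q) + (1 - p) * ln ((1 - p) / (1 - q)).

Definition gobj (x mu1 mu2 l : R) : R :=
  (1 - x) * kl l mu1 + x * kl l mu2.

Definition gfun (x mu1 mu2 : R) : Rbar :=
  Glb_Rbar (fun y => exists l, 0 < l < 1 /\ y = gobj x mu1 mu2 l).

Definition is_lam_min (x mu1 mu2 l : R) : Prop :=
  0 < l < 1 /\ forall l', 0 < l' < 1 -> gobj x mu1 mu2 l <= gobj x mu1 mu2 l'.

Definition lam (x mu1 mu2 : R) : R :=
  epsilon (inhabits 0) (is_lam_min x mu1 mu2).

Definition is_xstar (mu1 mu2 x : R) : Prop :=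
  0 < x < 1 /\ forall x', 0 < x' < 1 -> Rbar_le (gfun x' mu1 mu2) (gfun x mu1 mu2).

Definition xstar (mu1 mu2 : R) : R :=
  epsilon (inhabits 0) (is_xstar mu1 mu2).

Definition inLambda (mu1 mu2 : R) : Prop :=
  0 < mu1 < 1 /\ 0 < mu2 < 1 /\ mu1 <> mu2.

Definition phi (t : R) : R := ln (1 + exp t).
Definition dphi (t : R) : R := exp t / (1 + exp t).
Definition dbar (a b : R) : R := phi a - phi b - (a - b) * dphi b.

Definition statementP : Prop :=
  forall a x : R, 0 < a < 1 -> 1/2 < x <= 1 ->
    exists mu1 mu2 : R, inLambda mu1 mu2 /\
      (mu1 > mu2 /\ mu1 + mu2 >= 1) /\
      lam x mu1 mu2 = a /\
      xstar mu1 mu2 < (1/2 + x) / 2.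

Definition statementD : Prop :=
  forall alpha x : R, 1/2 < x <= 1 ->
    exists xi1 xi2 : R, xi1 <> xi2 /\
      (xi1 > xi2 /\ xi1 >= - xi2) /\
      (1 - x) * xi1 + x * xi2 = alpha /\
      let xt := (1/2 + x) / 2 in
      dbar xi1 ((1 - xt) * xi1 + xt * xi2) > dbar xi2 ((1 - xt) * xi1 + xt * xi2).

(* Main.v *)
Require Import Defs.
From Stdlib Require Import Reals.
From Coquelicot Require Import Coquelicot.
From Stdlib Require Import Lra ClassicalEpsilon.
Open Scope R_scope.

Lemma sg_bounds t : 0 < dphi t < 1.
Proof.
  unfold dphi. pose proof (exp_pos t). split.
  - apply Rdiv_lt_0_compat; lra.
  - apply Rmult_lt_reg_r with (1 + exp t); [lra|].
    field_simplify; lra.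
Qed.

Lemma one_m_sg t : 1 - dphi t = / (1 + exp t).
Proof. unfold dphi. pose proof (exp_pos t). field. lra. Qed.

Lemma ln_sg t : ln (dphi t) = t - phi t.
Proof.
  unfold dphi, phi. pose proof (exp_pos t).
  rewrite ln_div; [|lra|lra]. rewrite ln_exp. ring.
Qed.

Lemma ln_1msg t : ln (1 - dphi t) = - phi t.
Proof.
  rewrite one_m_sg. unfold phi. pose proof (exp_pos t).
  rewrite ln_Rinv; [ring|lra].
Qed.

Definition logit (u : R) := ln (u / (1 - u)).

Lemma sg_logit u : 0 < u < 1 -> dphi (logit u) = u.
Proof.
  intros Hu. unfold dphi, logit. rewrite exp_ln.
  - field. lra.
  - apply Rdiv_lt_0_compat; lra.
Qed.

Lemma sg_surj u : 0 < u < 1 -> exists t, u = dphi t.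
Proof. intros Hu. exists (logit u). now rewrite sg_logit. Qed.

Lemma sg_lt a b : a < b -> dphi a < dphi b.
Proof.
  intros H.
  assert (E : forall t, dphi t = 1 - / (1 + exp t)) by (intro t; rewrite <- one_m_sg; ring).
  rewrite !E. pose proof (exp_increasing _ _ H). pose proof (exp_pos a).
  assert (/ (1 + exp b) < / (1 + exp a)) by (apply Rinv_lt_contravar; nra).
  lra.
Qed.

Lemma sg_lt_iff a b : dphi a < dphi b <-> a < b.
Proof.
  split; [|apply sg_lt]. intros H.
  destruct (Rlt_le_dec a b) as [h|h]; auto.
  destruct (Req_dec a b) as [e|e]; [subst; lra|].
  assert (b < a) by lra. pose proof (sg_lt _ _ H0). lra.
Qed.

Lemma sg_le_iff a b : dphi a <= dphi b <-> a <= b.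
Proof.
  split; intros H.
  - destruct (Rle_dec a b) as [h|h]; auto.
    assert (b < a) by lra. apply sg_lt in H0. lra.
  - destruct (Req_dec a b) as [e|e]; [subst; lra|].
    assert (a < b) by lra. apply sg_lt in H0. lra.
Qed.

Lemma sg_inj a b : dphi a = dphi b -> a = b.
Proof.
  intros H. destruct (Rtotal_order a b) as [h|[h|h]]; auto;
  apply sg_lt in h; lra.
Qed.

Lemma sg_neg t : dphi (- t) = 1 - dphi t.
Proof.
  rewrite one_m_sg. unfold dphi. rewrite exp_Ropp. pose proof (exp_pos t).
  field. split; lra.
Qed.

Lemma ln_lt_m1 y : 0 < y -> y <> 1 -> ln y < y - 1.
Proof.
  intros Hy H1. assert (ln y <> 0).
  { intro E. apply H1. rewrite <- (exp_ln y Hy), E. apply exp_0. }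
  pose proof (exp_ineq1 _ H). rewrite exp_ln in H0; lra.
Qed.

Lemma kl_pos p q : 0 < p < 1 -> 0 < q < 1 -> p <> q -> 0 < kl p q.
Proof.
  intros Hp Hq Hne. unfold kl.
  assert (A : ln (q / p) < q / p - 1).
  { apply ln_lt_m1. apply Rdiv_lt_0_compat; lra.
    intro E. apply Hne. apply (Rmult_eq_compat_r p) in E.
    field_simplify in E; lra. }
  assert (B : ln ((1-q) / (1-p)) < (1-q) / (1-p) - 1).
  { apply ln_lt_m1. apply Rdiv_lt_0_compat; lra.
    intro E. apply Hne. apply (Rmult_eq_compat_r (1-p)) in E.
    field_simplify in E; lra. }
  rewrite ln_div in A, B by lra. rewrite !ln_div by lra.
  assert (p * (q / p - 1) = q - p) by (field; lra).
  assert ((1-p) * ((1-q) / (1-p) - 1) = p - q) by (field; lra).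
  nra.
Qed.

Lemma kl_self p : 0 < p < 1 -> kl p p = 0.
Proof.
  intros Hp. unfold kl. replace (p / p) with 1 by (field; lra).
  replace ((1-p)/(1-p)) with 1 by (field; lra). rewrite ln_1. ring.
Qed.

Lemma kl_nonneg p q : 0 < p < 1 -> 0 < q < 1 -> 0 <= kl p q.
Proof.
  intros Hp Hq. destruct (Req_dec p q) as [e|e].
  - subst. rewrite kl_self; lra.
  - apply Rlt_le, kl_pos; auto.
Qed.

Lemma kl_sg l t : 0 < l < 1 ->
  kl l (dphi t) = l * ln l + (1 - l) * ln (1 - l) - l * t + phi t.
Proof.
  intros Hl. pose proof (sg_bounds t). unfold kl.
  rewrite !ln_div by lra. rewrite ln_sg, ln_1msg. ring.
Qed.

Lemma dbar_kl a b : dbar a b = kl (dphi b) (dphi a).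
Proof.
  rewrite kl_sg by apply sg_bounds. rewrite ln_sg, ln_1msg.
  unfold dbar. ring.
Qed.

Lemma dbar_pos a b : a <> b -> 0 < dbar a b.
Proof.
  intros H. rewrite dbar_kl. apply kl_pos; try apply sg_bounds.
  intro E. apply H. symmetry. now apply sg_inj.
Qed.

Definition G (x xi1 xi2 : R) :=
  (1 - x) * phi xi1 + x * phi xi2 - phi ((1 - x) * xi1 + x * xi2).

Lemma gobj_id x xi1 xi2 l : 0 < l < 1 ->
  gobj x (dphi xi1) (dphi xi2) l =
  kl l (dphi ((1 - x) * xi1 + x * xi2)) + G x xi1 xi2.
Proof.
  intros Hl. unfold gobj, G. rewrite !kl_sg by auto. ring.
Qed.

Lemma lam_eq x xi1 xi2 :
  lam x (dphi xi1) (dphi xi2) = dphi ((1 - x) * xi1 + x * xi2).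
Proof.
  set (L := dphi ((1 - x) * xi1 + x * xi2)).
  assert (HL : 0 < L < 1) by apply sg_bounds.
  assert (Hm : is_lam_min x (dphi xi1) (dphi xi2) L).
  { split; auto. intros l' Hl'. rewrite !gobj_id by auto.
    fold L. rewrite kl_self by auto. pose proof (kl_nonneg l' L Hl' HL). lra. }
  unfold lam.
  pose proof (epsilon_spec (inhabits 0) _ (ex_intro _ L Hm)) as [H1 H2].
  set (l0 := epsilon _ _) in *.
  specialize (H2 L HL). rewrite !gobj_id in H2 by auto. fold L in H2.
  rewrite kl_self in H2 by auto.
  destruct (Req_dec l0 L) as [e|e]; auto.
  pose proof (kl_pos l0 L H1 HL e). lra.
Qed.

Lemma gfun_eq x xi1 xi2 : gfun x (dphi xi1) (dphi xi2) = Finite (G x xi1 xi2).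
Proof.
  unfold gfun. apply is_glb_Rbar_unique.
  set (L := dphi ((1 - x) * xi1 + x * xi2)).
  assert (HL : 0 < L < 1) by apply sg_bounds.
  split.
  - intros y [l [Hl ->]]. simpl. rewrite gobj_id by auto. fold L.
    pose proof (kl_nonneg l L Hl HL). lra.
  - intros b Hb. specialize (Hb (gobj x (dphi xi1) (dphi xi2) L)).
    rewrite gobj_id in Hb by auto. fold L in Hb. rewrite kl_self in Hb by auto.
    rewrite Rplus_0_l in Hb. apply Hb. exists L. split; auto.
    rewrite gobj_id by auto. fold L. rewrite kl_self by auto. ring.
Qed.

Lemma xstar_iff xi1 xi2 xt : xi2 < xi1 ->
  (xstar (dphi xi1) (dphi xi2) < xt <->
   dbar xi1 ((1 - xt) * xi1 + xt * xi2) > dbar xi2 ((1 - xt) * xi1 + xt * xi2)).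
Proof.
  intros Hlt.
  set (d := xi1 - xi2). assert (Hd : 0 < d) by (unfold d; lra).
  set (s := (phi xi1 - phi xi2) / d).
  assert (Hs : s * d = phi xi1 - phi xi2) by (unfold s; field; lra).
  assert (Hs1 : s < dphi xi1).
  { pose proof (dbar_pos xi2 xi1 ltac:(lra)). unfold dbar in H.
    apply Rmult_lt_reg_r with d; auto. unfold d in *. nra. }
  assert (Hs2 : dphi xi2 < s).
  { pose proof (dbar_pos xi1 xi2 ltac:(lra)). unfold dbar in H.
    apply Rmult_lt_reg_r with d; auto. unfold d in *. nra. }
  pose proof (sg_bounds xi1). pose proof (sg_bounds xi2).
  set (es := logit s).
  assert (Hes : dphi es = s) by (apply sg_logit; lra).
  assert (He1 : es < xi1) by (apply sg_lt_iff; lra).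
  assert (He2 : xi2 < es) by (apply sg_lt_iff; lra).
  set (xs := (xi1 - es) / d).
  assert (Hxs : 0 < xs < 1).
  { unfold xs. split.
    - apply Rdiv_lt_0_compat; lra.
    - apply Rmult_lt_reg_r with d; auto. field_simplify; unfold d in *; lra. }
  assert (Hexs : (1 - xs) * xi1 + xs * xi2 = es) by (unfold xs, d in *; field; lra).
  assert (Key : forall x, G xs xi1 xi2 - G x xi1 xi2 = dbar ((1 - x) * xi1 + x * xi2) es).
  { intro x. unfold G. rewrite Hexs. unfold dbar. rewrite Hes.
    unfold s, xs, d in *. field. lra. }
  assert (Hstar : xstar (dphi xi1) (dphi xi2) = xs).
  { assert (Hm : is_xstar (dphi xi1) (dphi xi2) xs).
    { split; auto. intros x' _. rewrite !gfun_eq. simpl.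
      pose proof (Key x'). destruct (Req_dec ((1 - x') * xi1 + x' * xi2) es) as [e|e].
      - rewrite e in H1. unfold dbar in H1. lra.
      - pose proof (dbar_pos _ _ e). lra. }
    unfold xstar.
    pose proof (epsilon_spec (inhabits 0) _ (ex_intro _ xs Hm)) as [H1 H2].
    set (x0 := epsilon _ _) in *.
    specialize (H2 xs Hxs). rewrite !gfun_eq in H2. simpl in H2.
    pose proof (Key x0).
    destruct (Req_dec ((1 - x0) * xi1 + x0 * xi2) es) as [e|e].
    - unfold xs. rewrite <- e. unfold d. field. lra.
    - pose proof (dbar_pos _ _ e). lra. }
  rewrite Hstar.
  set (m := (1 - xt) * xi1 + xt * xi2).
  assert (Hdiff : dbar xi1 m - dbar xi2 m = d * (s - dphi m)).
  { unfold dbar. rewrite Rmult_minus_distr_l, (Rmult_comm d s), Hs. unfold d. ring. }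
  assert (Hm : m = xi1 - xt * d) by (unfold m, d; ring).
  assert (Hes' : es = xi1 - xs * d) by (unfold xs; field; lra).
  clearbody m xs es s d.
  split; intros Hq.
  - assert (Q0 : (xt - xs) * d > 0) by (apply Rmult_lt_0_compat; lra).
    assert (Q1 : m < es) by (rewrite Hm, Hes'; nra).
    assert (Q2 : dphi m < dphi es) by (apply sg_lt; auto). nra.
  - assert (Q1 : dphi m < s) by nra.
    assert (Q3 : m < es) by (apply sg_lt_iff; rewrite Hes; exact Q1).
    rewrite Hm, Hes' in Q3.
    destruct (Rlt_le_dec xs xt) as [h|h]; auto.
    assert (Q2 : (xs - xt) * d >= 0) by (apply Rle_ge, Rmult_le_pos; lra).
    rewrite Rmult_minus_distr_r in Q2. lra.
Qed.

Theorem mainTheorem3 : statementP <-> statementD.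
Proof.
  split.
  - intros HP alpha x Hx.
    destruct (HP (dphi alpha) x (sg_bounds alpha) Hx)
      as (m1 & m2 & HL & (Hgt & Hsum) & Hlam & Hxs).
    destruct HL as (Hm1 & Hm2 & _).
    destruct (sg_surj m1 Hm1) as [xi1 ->].
    destruct (sg_surj m2 Hm2) as [xi2 ->].
    apply (proj1 (sg_lt_iff _ _)) in Hgt.
    exists xi1, xi2. split; [intro E; lra|]. split; [split; [lra|]|].
    + assert (dphi (- xi2) <= dphi xi1) by (rewrite sg_neg; lra).
      apply (proj1 (sg_le_iff _ _)) in H. lra.
    + split.
      * rewrite lam_eq in Hlam. now apply sg_inj.
      * cbv zeta. apply xstar_iff; auto.
  - intros HD a x Ha Hx.
    destruct (sg_surj a Ha) as [alpha ->].
    destruct (HD alpha x Hx) as (xi1 & xi2 & Hne & (Hgt & Hge) & Heq & Hd).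
    cbv zeta in Hd.
    exists (dphi xi1), (dphi xi2).
    pose proof (sg_bounds xi1). pose proof (sg_bounds xi2).
    assert (dphi xi2 < dphi xi1) by (apply sg_lt; lra).
    split; [repeat split; lra|].
    split; [split; [lra|]|].
    + assert (dphi (- xi2) <= dphi xi1) by (apply sg_le_iff; lra).
      rewrite sg_neg in H2. lra.
    + split.
      * rewrite lam_eq. now rewrite Heq.
      * apply xstar_iff; auto.
Qed.
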